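(* Let $\chi$ be a countable set and let $B \ge 1$ be an integer. Let $s:\{1,2,\dots,B\} \to (0,\infty)$ be an injective function. Then there exists a function $f:\chi\to\mathbb{R}$ such that the map $$h(X) = s(|X|)\cdot \frac{1}{|X|}\sum_{x \in X} f(x)$$ (the sum taken with multiplicity) is injective on the set of all nonempty finite multisets $X$ of elements of $\chi$ with $|X| \le B$.
   Context: $|X|$ denotes the cardinality of the multiset $X$ counted with multiplicity (the neighbourhood size / node degree). The map $h$ is the mean aggregator of $f$ composed with the degree-scaler $s$; the positivity assumption on $s$ can always be achieved from an arbitrary injective scaler by adding a constant (an affine shift), which preserves injectivity. The special case $s(d)=d$ gives the sum aggregator $\sum_{x\in X} f(x)$. *)

(* Defs.v *)
From HB Require Import structures.
From mathcomp Require Import all_boot all_order all_algebra.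
From mathcomp Require Import reals.
Set Implicit Arguments. Unset Strict Implicit. Unset Printing Implicit Defensive.
Import Order.TTheory GRing.Theory Num.Theory.
Local Open Scope ring_scope.

(* A finite multiset over chi is represented by a sequence, up to permutation
   (perm_eq).  Its cardinality with multiplicity is [size X]. *)

Definition scaled_mean_agg (R : realType) (chi : Type)
    (s : nat -> R) (f : chi -> R) (X : seq chi) : R :=
  s (size X) * ((size X)%:R)^-1 * \sum_(x <- X) f x.

(* Main.v *)
Require Import Defs.
From HB Require Import structures.
From mathcomp Require Import all_boot all_order all_algebra.
From mathcomp Require Import reals lra zify.
Import Order.TTheory GRing.Theory Num.Theory.
Local Open Scope ring_scope.

Section Key.
Variables (R : realType) (chi : countType) (B : nat).
Let r : R := ((B.+1)%:R)^-1.
Definition dd (x : chi) : R := r ^+ (pickle x).+1.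

Lemma r_ge0 : 0 <= r. Proof. by rewrite /r invr_ge0 ler0n. Qed.
Lemma r_gt0 : 0 < r. Proof. by rewrite /r invr_gt0 ltr0n. Qed.
Lemma r_le1 : r <= 1.
Proof. by rewrite /r invf_le1 ?ltr0n // ler1n. Qed.
Lemma Br_lt1 : B%:R * r < 1.
Proof.
rewrite /r ltr_pdivrMr ?ltr0n // mul1r ltr_nat //.
Qed.

Lemma filter_nseq1 (x0 : chi) (s : seq chi) :
  [seq x <- s | pred1 x0 x] = nseq (count_mem x0 s) x0.
Proof.
elim: s => [|y s IH] //=; rewrite IH eq_sym; case: (eqVneq y x0) => [->|] //=.
Qed.

Lemma sum_split (F : chi -> R) x0 (X : seq chi) :
  \sum_(x <- X) F x = (count_mem x0 X)%:R * F x0 + \sum_(x <- filter (predC1 x0) X) F x.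
Proof.
elim: X => [|y X IH]; first by rewrite !big_nil mul0r addr0.
rewrite big_cons /= IH; case: (eqVneq y x0) => [->|ne] /=.
  by rewrite add1n -natr1 mulrDl mul1r; lra.
by rewrite add0n big_cons; lra.
Qed.

Lemma sum_ge0 (X : seq chi) : 0 <= \sum_(x <- X) dd x.
Proof. by apply: sumr_ge0 => x _; rewrite /dd exprn_ge0 // r_ge0. Qed.

Lemma sum_le (X : seq chi) (c : R) : (forall x, x \in X -> dd x <= c) ->
  \sum_(x <- X) dd x <= (size X)%:R * c.
Proof.
elim: X => [|y X IH] H; first by rewrite big_nil mul0r.
rewrite big_cons /= -nat1r mulrDl mul1r lerD //.
  by apply: H; rewrite mem_head.
by apply: IH => x hx; apply: H; rewrite in_cons hx orbT.
Qed.

Lemma exists_min (s : seq chi) : s != [::] ->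
  exists2 x0, x0 \in s & forall y, y \in s -> (pickle x0 <= pickle y)%N.
Proof.
elim: s => [|y s IH] //= _.
case: (eqVneq s [::]) => [->|ne].
  by exists y; rewrite ?mem_head // => z; rewrite inE => /eqP ->.
have [x0 hx0 hmin] := IH ne.
case: (leqP (pickle y) (pickle x0)) => h.
  exists y; first by rewrite mem_head.
  move=> z; rewrite inE => /orP [/eqP -> //|hz]; exact: leq_trans h (hmin _ hz).
exists x0; first by rewrite in_cons hx0 orbT.
move=> z; rewrite inE => /orP [/eqP -> |hz]; [exact: ltnW | exact: hmin].
Qed.

Lemma key n (X Y : seq chi) : (size X + size Y <= n)%N ->
  (size X <= B)%N -> (size Y <= B)%N ->
  \sum_(x <- X) dd x = \sum_(x <- Y) dd x -> perm_eq X Y.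
Proof.
elim: n X Y => [|n IH] X Y.
  by case: X; case: Y.
move=> hn hX hY hs.
case: (eqVneq (X ++ Y) [::]) => [|ne].
  by case: X {hn hX hs} => //; case: Y {hY}.
have [x0 hx0 hmin] := exists_min (X++Y) ne.
set X' := filter (predC1 x0) X; set Y' := filter (predC1 x0) Y.
have bnd : forall Z, {subset Z <= X ++ Y} -> (size Z <= B)%N ->
   0 <= \sum_(x <- filter (predC1 x0) Z) dd x <= B%:R * r * dd x0.
  move=> Z sZ hZ; rewrite sum_ge0 /=.
  apply: le_trans (sum_le _ (r * dd x0) _) _.
    move=> x; rewrite mem_filter => /andP [/= nx xZ].
    have hx : (pickle x0 < pickle x)%N.
      rewrite ltn_neqAle hmin ?sZ // andbT.
      by apply/eqP => /(pcan_inj pickleK) E; rewrite E eqxx in nx.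
    rewrite /dd -exprS; apply: ler_wiXn2l; rewrite ?r_ge0 ?r_le1 //.
  rewrite -mulrA ler_wpM2r ?mulr_ge0 ?r_ge0 /dd ?exprn_ge0 ?r_ge0 // ler_nat.
  by rewrite size_filter (leq_trans (count_size _ _)).
have bX : 0 <= \sum_(x <- X') dd x <= B%:R * r * dd x0.
  by apply: bnd hX => x h; rewrite mem_cat h.
have bY : 0 <= \sum_(x <- Y') dd x <= B%:R * r * dd x0.
  by apply: bnd hY => x h; rewrite mem_cat h orbT.
move: hs; rewrite (sum_split _ x0 X) (sum_split _ x0 Y) -/X' -/Y' => hs.
have d0 : 0 < dd x0 by rewrite /dd exprn_gt0 // r_gt0.
have Br := Br_lt1.
have Brd : B%:R * r * dd x0 < dd x0 by rewrite gtr_pMl.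
have hab : count_mem x0 X = count_mem x0 Y.
  case: (ltngtP (count_mem x0 X) (count_mem x0 Y)) => // h; exfalso.
    have : (count_mem x0 X)%:R + 1 <= (count_mem x0 Y)%:R :> R.
      by rewrite natr1 ler_nat.
    move=> hh.
    have : ((count_mem x0 X)%:R + 1) * dd x0 <= (count_mem x0 Y)%:R * dd x0.
      by rewrite ler_wpM2r // ltW.
    rewrite mulrDl mul1r; move: bX bY => /andP [? ?] /andP [? ?]; lra.
  have : (count_mem x0 Y)%:R + 1 <= (count_mem x0 X)%:R :> R.
    by rewrite natr1 ler_nat.
  move=> hh.
  have : ((count_mem x0 Y)%:R + 1) * dd x0 <= (count_mem x0 X)%:R * dd x0.
    by rewrite ler_wpM2r // ltW.
  rewrite mulrDl mul1r; move: bX bY => /andP [? ?] /andP [? ?]; lra.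
have hs' : \sum_(x <- X') dd x = \sum_(x <- Y') dd x.
  by move: hs; rewrite hab => /addrI.
have szX : size X = (count_mem x0 X + size X')%N.
  by rewrite /X' size_filter -(count_predC (pred1 x0)).
have szY : size Y = (count_mem x0 Y + size Y')%N.
  by rewrite /Y' size_filter -(count_predC (pred1 x0)).
have pos : (0 < count_mem x0 X)%N.
  move: hx0; rewrite mem_cat => /orP [h|h].
    by rewrite -has_count has_pred1.
  by rewrite hab -has_count has_pred1.
have IH' : perm_eq X' Y'.
  apply: IH => //.
  - move: hn pos; rewrite szX szY -hab. move: (count_mem x0 X) (size X') (size Y') => a b c; lia.
  - by rewrite (leq_trans _ hX) // szX leq_addl.
  - by rewrite (leq_trans _ hY) // szY leq_addl.
apply: (perm_trans (_ : perm_eq _ ([seq x <- Y | pred1 x0 x] ++ Y'))); last first.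
  by rewrite perm_filterC.
rewrite -(perm_filterC (pred1 x0) X).
apply: perm_cat => //.
by rewrite !filter_nseq1 hab.
Qed.
End Key.
Lemma sum_constT (R : realType) (chi : Type) (T : R) (X : seq chi) :
  \sum_(x <- X) T = (size X)%:R * T.
Proof.
elim: X => [|y X IH]; first by rewrite big_nil mul0r.
by rewrite big_cons IH /= -nat1r mulrDl mul1r.
Qed.

Lemma term_le (R : realType) (B : nat) (F : 'I_B.+1 -> R) (i : 'I_B.+1) :
  (forall j, 0 <= F j) -> F i <= \sum_(j < B.+1) F j.
Proof.
move=> H; rewrite (bigD1 i) //= lerDl; exact: sumr_ge0.
Qed.

Theorem theorem2 (R : realType) (chi : countType) (B : nat) (s : nat -> R) :
  (1 <= B)%N ->
  (forall i j : nat, (1 <= i <= B)%N -> (1 <= j <= B)%N -> s i = s j -> i = j) ->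
  (forall i : nat, (1 <= i <= B)%N -> 0 < s i) ->
  exists f : chi -> R,
    forall X Y : seq chi,
      (0 < size X)%N -> (size X <= B)%N ->
      (0 < size Y)%N -> (size Y <= B)%N ->
      scaled_mean_agg s f X = scaled_mean_agg s f Y -> perm_eq X Y.
Proof.
move=> hB sinj spos.
pose Sabs : R := \sum_(i < B.+1) `|s i| + 1.
have Sabs_ge : forall i, (i <= B)%N -> `|s i| < Sabs.
  move=> i hi; rewrite /Sabs.
  have H := term_le _ _ (fun j : 'I_B.+1 => `|s j|) (Ordinal (hi : (i < B.+1)%N)) (fun j => normr_ge0 _).
  simpl in H; lra.
have Sabs0 : 0 <= Sabs by rewrite /Sabs addr_ge0 // sumr_ge0.
pose T : R := \sum_(i < B.+1) \sum_(j < B.+1) Sabs / `|s i - s j|.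
have T_ge : forall i j, (i <= B)%N -> (j <= B)%N -> Sabs / `|s i - s j| <= T.
  move=> i j hi hj.
  apply: le_trans (term_le _ _ (fun j0 : 'I_B.+1 => Sabs / `|s (Ordinal (hi : (i < B.+1)%N)) - s j0|)
     (Ordinal (hj : (j < B.+1)%N)) _) _.
    by move=> j0; rewrite divr_ge0.
  apply: (term_le _ _ (fun i0 : 'I_B.+1 => \sum_(j0 < B.+1) Sabs / `|s i0 - s j0|)
     (Ordinal (hi : (i < B.+1)%N))).
  by move=> i0; apply: sumr_ge0 => j0 _; rewrite divr_ge0.
pose f (x : chi) : R := T + dd R chi B x.
exists f.
have agg : forall X : seq chi, (0 < size X)%N ->
  scaled_mean_agg s f X = s (size X) * T + s (size X) / (size X)%:R * \sum_(x <- X) dd R chi B x.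
  move=> X hX; rewrite /scaled_mean_agg /f big_split /= sum_constT.
  have nz : (size X)%:R != 0 :> R by rewrite pnatr_eq0 -lt0n.
  rewrite mulrDr; congr (_ + _); rewrite mulrA -(mulrA _ _ (size X)%:R) mulVf // mulr1 //.
have bnd : forall X : seq chi, (0 < size X)%N -> (size X <= B)%N ->
  0 <= s (size X) / (size X)%:R * \sum_(x <- X) dd R chi B x <= s (size X).
  move=> X h0 hB'.
  have sp : 0 < s (size X) by apply: spos; rewrite h0 hB'.
  have np : 0 < (size X)%:R :> R by rewrite ltr0n.
  have D0 := sum_ge0 R chi B X.
  have D1 : \sum_(x <- X) dd R chi B x <= (size X)%:R * 1.
    apply: (sum_le R chi B) => x _; rewrite /dd exprn_ile1 // ?r_ge0 ?r_le1 //.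
  apply/andP; split; first by apply: mulr_ge0 => //; apply: divr_ge0; apply: ltW.
  apply: le_trans (_ : s (size X) / (size X)%:R * ((size X)%:R * 1) <= _).
    by rewrite ler_wpM2l // divr_ge0 // ltW.
  by rewrite mulr1 mulrAC -mulrA mulfV ?mulr1 // gt_eqF.
move=> X Y hX0 hXB hY0 hYB heq.
rewrite !agg // in heq.
have [bX1 bX2] := andP (bnd X hX0 hXB).
have [bY1 bY2] := andP (bnd Y hY0 hYB).
case: (eqVneq (size X) (size Y)) => [E|NE].
  apply: (key R chi B (size X + size Y)%N) => //.
  move: heq; rewrite -E => /addrI /mulfI; apply.
  rewrite mulf_neq0 ?invr_eq0 ?pnatr_eq0 -?lt0n // gt_eqF // spos // hX0 hXB. by [].
have sX := spos _ (introT andP (conj hX0 hXB)).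
have sY := spos _ (introT andP (conj hY0 hYB)).
have NEs : s (size X) != s (size Y).
  apply/eqP => /sinj E2; move: NE; rewrite E2 ?hX0 ?hXB ?hY0 ?hYB ?eqxx //.
have hT := T_ge _ _ hXB hYB.
have ap : 0 < `|s (size X) - s (size Y)| by rewrite normr_gt0 subr_eq0.
move: hT; rewrite ler_pdivrMr // => hT.
have aX := Sabs_ge _ hXB; have aY := Sabs_ge _ hYB.
have nX := ler_norm (s (size X)); have nY := ler_norm (s (size Y)).
exfalso.
case: (ltgtP (s (size X)) (s (size Y))) => hc.
- move: hT; rewrite ltr0_norm ?subr_lt0 // mulrN mulrBr => hT; lra.
- move: hT; rewrite gtr0_norm ?subr_gt0 // mulrBr => hT; lra.
- by rewrite hc eqxx in NEs.
Qed.
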